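(* Let $n\ge1$ and $d\in\mathbb{N}$, and define $N$ by $N(n,d)=N+1$. Let $X\subset\mathbb{R}^n$ be a self-similar set with $\operatorname{Hdeg}(X)\ge d+1$. Then $\tau^d_{N,\mathbf{s}}(X)=\mathcal{P}_d^*$ for every $\mathbf{s}\in X$.
   Context: $N(n,d):=\binom{n+d}{d}$, the dimension of the space $\mathcal{P}_d$ of real polynomials in $n$ variables of degree $\le d$; $\mathcal{P}_d^*$ is its dual. For $A\subset\mathbb{R}^n$, $\operatorname{Hdeg}(A)$ is the minimum degree of a nonzero polynomial vanishing on $A$ ($\infty$ if none exists). A map $\varphi:\mathbb{R}^n\to\mathbb{R}^n$ is a contraction if $\|\varphi(\mathbf{x})-\varphi(\mathbf{y})\|\le K\|\mathbf{x}-\mathbf{y}\|$ for some $K\in(0,1)$. Given contractions $\varphi_1,\dots,\varphi_p$, there is a unique nonempty compact $S$ with $S=\bigcup_i\varphi_i(S)$ (the attractor). A similarity transformation is an affine map preserving the angle of every ordered triple of points (equivalently $\|\varphi(\mathbf{x})-\varphi(\mathbf{y})\|=\lambda\|\mathbf{x}-\mathbf{y}\|$ for some $\lambda>0$). A set is self-similar if it is the attractor of $p\ge2$ contractions that are all similarity transformations. For $\mathbf{a}\in\mathbb{R}^n$ and $|\mathbf{p}|\le d$, $\delta^{(\mathbf{p})}_{\mathbf{a}}\in\mathcal{P}_d^*$ is $f\mapsto(-1)^{|\mathbf{p}|}\partial^{|\mathbf{p}|}f/\partial\mathbf{x}^{\mathbf{p}}(\mathbf{a})$, $\delta_{\mathbf{a}}=\delta^{(\mathbf{0})}_{\mathbf{a}}$.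 A bundle over $X$ is a subset $E\subset X\times\mathcal{P}_d^*$ whose fibres $E_{\mathbf{a}}=\{\xi:(\mathbf{a},\xi)\in E\}$ are linear subspaces. Higher order paratangent bundle $\tau^d_N(X)$: put $E_0=\{(\mathbf{a},\lambda\delta_{\mathbf{a}}):\mathbf{a}\in X,\lambda\in\mathbb{R}\}$. Given $E_k$, let $\Delta E_k$ be the set of $(\mathbf{a}_0,\dots,\mathbf{a}_N,\xi_0+\dots+\xi_N)\in X^{N+1}\times\mathcal{P}_d^*$ with $\mathbf{a}_i\in X$, $\xi_i\in E_{k,\mathbf{a}_i}$ and $|\mathbf{a}_i-\mathbf{a}_0|^{d-|\alpha|}\,|\xi_i((\mathbf{x}-\mathbf{a}_i)^\alpha)|\le1$ for all multi-indices $|\alpha|\le d$, $0\le i\le N$. Let $E'_k$ be the set of $(\mathbf{a},\xi)\in X\times\mathcal{P}_d^*$ with $(\mathbf{a},\dots,\mathbf{a},\xi)$ in the closure of $\Delta E_k$, and $E_{k+1}$ the bundle whose fibre at $\mathbf{a}$ is the linear span of $E'_{k,\mathbf{a}}$. The increasing sequence $E_k$ stabilizes and $\tau^d_N(X):=E_{2\dim\mathcal{P}_d^*}$; $\tau^d_{N,\mathbf{a}}(X)$ is its fibre at $\mathbf{a}$. *)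

(* Defs.v *)
From HB Require Import structures.
From mathcomp Require Import all_boot all_order all_algebra.
From mathcomp Require Import mpoly.
From mathcomp Require Import all_classical all_reals all_analysis.
Import Order.TTheory GRing.Theory Num.Theory.
Import numFieldTopology.Exports numFieldNormedType.Exports.

Unset Printing Implicit Defensive.

Local Open Scope classical_set_scope.
Local Open Scope ring_scope.

Definition coords {R : realType} {n : nat} (x : 'rV[R]_n) : 'I_n -> R :=
  fun i => x ord0 i.

Definition edist {R : realType} {n : nat} (x y : 'rV[R]_n) : R :=
  Num.sqrt (\sum_(i < n) (x ord0 i - y ord0 i) ^+ 2).

(* N(n,d) = binom(n+d, d) = dim P_d = dim P_d^*. *)
Definition Ndim (n d : nat) : nat := 'C(n + d, d).

(* P_d^* : a linear functional on P_d (polynomials in n variables of degree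
   <= d) is encoded by its values on the monomial basis
   { x^m : |m| <= d } of P_d, i.e. by a function on 'X_{1..n < d.+1}. *)
Definition dualP (R : realType) (n d : nat) := {ffun 'X_{1..n < d.+1} -> R}.

Definition dapp {R : realType} {n d : nat} (xi : dualP R n d)
  (f : {mpoly R[n]}) : R :=
  \sum_(m : 'X_{1..n < d.+1}) f@_m * xi m.

Definition delta {R : realType} {n : nat} (d : nat) (a : 'rV[R]_n) : dualP R n d :=
  [ffun m : 'X_{1..n < d.+1} => ('X_[(m : 'X_{1..n})] : {mpoly R[n]}).@[coords a]].

Definition shiftmon {R : realType} {n : nat} (a : 'rV[R]_n) (al : 'X_{1..n})
  : {mpoly R[n]} :=
  \prod_(i < n) ('X_i - (coords a i)%:MP) ^+ (al i).

Definition lspan {R : realType} {n d : nat} (S : set (dualP R n d)) : set (dualP R n d) :=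
  fun xi => exists s : seq (R * dualP R n d),
    (forall c, c \in s -> S c.2) /\ xi = \sum_(c <- s) c.1 *: c.2.

(* Bundles over X: predicates E a xi, i.e. subsets of X x P_d^*. *)
Definition bundle (R : realType) (n d : nat) := 'rV[R]_n -> dualP R n d -> Prop.

Definition E0 {R : realType} {n : nat} (d : nat) (X : set 'rV[R]_n) : bundle R n d :=
  fun a xi => X a /\ exists lam : R, xi = lam *: delta d a.

Definition DeltaE {R : realType} {n d : nat} (N : nat) (X : set 'rV[R]_n)
  (E : bundle R n d) : ('I_N.+1 -> 'rV[R]_n) -> dualP R n d -> Prop :=
  fun as_ xi =>
    (forall i, X (as_ i)) /\
    exists xis : 'I_N.+1 -> dualP R n d,
      (forall i, E (as_ i) (xis i)) /\
      xi = \sum_(i < N.+1) xis i /\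
      (forall (i : 'I_N.+1) (al : 'X_{1..n < d.+1}),
         edist (as_ i) (as_ ord0) ^+ (d - mdeg al) *
           `| dapp (xis i) (shiftmon (as_ i) al) | <= 1).

(* E'_k: (a,...,a,xi) lies in the closure of Delta E_k (closure in the
   finite-dimensional space (R^n)^{N+1} x P_d^*, written out with
   epsilon-neighbourhoods). *)
Definition Eprime {R : realType} {n d : nat} (N : nat) (X : set 'rV[R]_n)
  (E : bundle R n d) : bundle R n d :=
  fun a xi => X a /\
    forall eps : R, 0 < eps ->
      exists (as_ : 'I_N.+1 -> 'rV[R]_n) (eta : dualP R n d),
        DeltaE N X E as_ eta /\
        (forall i, edist (as_ i) a < eps) /\
        (forall m, `| eta m - xi m | < eps).

Fixpoint Eseq {R : realType} {n : nat} (d N : nat) (X : set 'rV[R]_n) (k : nat)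
  : bundle R n d :=
  match k with
  | 0 => E0 d X
  | k'.+1 => fun a xi => X a /\ lspan (Eprime N X (Eseq d N X k') a) xi
  end.

Definition paratangent {R : realType} {n : nat} (d N : nat) (X : set 'rV[R]_n)
  : bundle R n d :=
  Eseq d N X (2 * Ndim n d).

(* Hdeg(X) >= k : every nonzero polynomial vanishing on X has degree >= k
   (i.e. min degree >= k, with min of the empty set = infinity).
   For p != 0 the total degree of p is (msize p).-1. *)
Definition Hdeg_ge {R : realType} {n : nat} (X : set 'rV[R]_n) (k : nat) : Prop :=
  forall p : {mpoly R[n]}, p != 0 ->
    (forall x, X x -> p.@[coords x] = 0) -> (k <= (msize p).-1)%N.

Definition contraction {R : realType} {n : nat} (phi : 'rV[R]_n -> 'rV[R]_n) : Prop :=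
  exists K : R, 0 < K < 1 /\ forall x y, edist (phi x) (phi y) <= K * edist x y.

Definition affine_map {R : realType} {n : nat} (phi : 'rV[R]_n -> 'rV[R]_n) : Prop :=
  exists (A : 'M[R]_n) (b : 'rV[R]_n), forall x, phi x = x *m A + b.

Definition similarity {R : realType} {n : nat} (phi : 'rV[R]_n -> 'rV[R]_n) : Prop :=
  affine_map phi /\
  exists lam : R, 0 < lam /\ forall x y, edist (phi x) (phi y) = lam * edist x y.

(* S is the attractor of phi_1..phi_p: the (unique, by Hutchinson) nonempty
   compact S with S = U_i phi_i(S). *)
Definition is_attractor {R : realType} {n p : nat}
  (phi : 'I_p -> 'rV[R]_n -> 'rV[R]_n) (S : set 'rV[R]_n) : Prop :=
  S !=set0 /\ compact S /\ S = \bigcup_(i in [set: 'I_p]) (phi i @` S).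

Definition self_similar {R : realType} {n : nat} (X : set 'rV[R]_n) : Prop :=
  exists (p : nat) (phi : 'I_p -> 'rV[R]_n -> 'rV[R]_n),
    (2 <= p)%N /\
    (forall i, contraction (phi i) /\ similarity (phi i)) /\
    is_attractor phi X.

(* Main.v *)
Set Warnings "-all".
Require Import Defs.
From HB Require Import structures.
From mathcomp Require Import all_boot all_order all_algebra.
From mathcomp Require Import mpoly.
From mathcomp Require Import all_classical all_reals all_analysis.
From mathcomp Require Import zify ring lra.
Import Order.TTheory GRing.Theory Num.Theory.
Import numFieldTopology.Exports numFieldNormedType.Exports.
Import Defs.
Local Open Scope classical_set_scope.
Local Open Scope ring_scope.
Lemma msize_mul_le (R : realType) n (p q : {mpoly R[n]}) (k l : nat) :
  (msize p <= k.+1)%N -> (msize q <= l.+1)%N -> (msize (p * q) <= (k + l).+1)%N.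
Proof.
have [->|nzp] := eqVneq p 0; first by rewrite mul0r msize0.
have [->|nzq] := eqVneq q 0; first by rewrite mulr0 msize0.
rewrite msizeM // => hp hq.
have : (0 < msize p)%N by rewrite lt0n msize_poly_eq0.
have : (0 < msize q)%N by rewrite lt0n msize_poly_eq0.
move: (msize p) (msize q) hp hq => a b; case: a => // a; case: b => // b.
rewrite addSn /= !ltnS addnS => ha hb _ _; exact: leq_add.
Qed.

Lemma msize_exp_le (R : realType) n (p : {mpoly R[n]}) (k e : nat) :
  (msize p <= k.+1)%N -> (msize (p ^+ e) <= (k * e).+1)%N.
Proof.
move=> hp; elim: e => [|e ih]; first by rewrite expr0 msize1 muln0.
by rewrite exprS mulnS; apply: msize_mul_le.
Qed.

Lemma msize_prod_le (R : realType) n (I : Type) (r : seq I) (F : I -> {mpoly R[n]})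
  (g : I -> nat) :
  (forall i, msize (F i) <= (g i).+1)%N ->
  (msize (\prod_(i <- r) F i) <= (\sum_(i <- r) g i).+1)%N.
Proof.
move=> h; elim: r => [|x r ih]; first by rewrite !big_nil msize1.
by rewrite !big_cons; apply: msize_mul_le.
Qed.

Lemma msize_sum_le (R : realType) n (I : Type) (r : seq I) (F : I -> {mpoly R[n]})
  (k : nat) :
  (forall i, msize (F i) <= k)%N -> (msize (\sum_(i <- r) F i) <= k)%N.
Proof.
move=> h; elim: r => [|x r ih]; first by rewrite !big_nil msize0.
rewrite !big_cons; apply: leq_trans (msizeD_le _ _) _.
by rewrite geq_max h ih.
Qed.

Lemma msizeXU_le (R : realType) n (i : 'I_n) : (msize ('X_i : {mpoly R[n]}) <= 2)%N.
Proof. by rewrite msizeX mdeg1. Qed.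

Lemma msizeC_le (R : realType) n (c : R) : (msize (c%:MP : {mpoly R[n]}) <= 1)%N.
Proof. by rewrite msizeC; case: (c != 0). Qed.

Lemma dapp_delta (R : realType) n d (a : 'rV[R]_n) (p : {mpoly R[n]}) :
  (msize p <= d.+1)%N -> dapp (delta d a) p = p.@[coords a].
Proof.
move=> hp; rewrite {2}(mpolywE hp) /dapp raddf_sum /=.
by apply: eq_bigr => m _; rewrite mevalZ ffunE.
Qed.

Lemma dapp_sumZ (R : realType) n d (I : Type) (r : seq I) (c : I -> R)
   (xi : I -> dualP R n d) (f : {mpoly R[n]}) :
  dapp (\sum_(i <- r) c i *: xi i) f = \sum_(i <- r) c i * dapp (xi i) f.
Proof.
rewrite /dapp.
under eq_bigr => m _ do rewrite sum_ffunE mulr_sumr.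
rewrite exchange_big /=; apply: eq_bigr => i _.
rewrite mulr_sumr; apply: eq_bigr => m _.
by rewrite ffunE /= mulrCA.
Qed.

Lemma dappZ (R : realType) n d (c : R) (xi : dualP R n d) (f : {mpoly R[n]}) :
  dapp (c *: xi) f = c * dapp xi f.
Proof.
rewrite /dapp mulr_sumr; apply: eq_bigr => m _; by rewrite ffunE /= mulrCA.
Qed.

Lemma dapp0 (R : realType) n d (f : {mpoly R[n]}) :
  dapp (0 : dualP R n d) f = 0.
Proof. by rewrite /dapp big1 // => m _; rewrite ffunE mulr0. Qed.

Lemma msize_shiftmon (R : realType) n (a : 'rV[R]_n) (al : 'X_{1..n}) :
  (msize (shiftmon a al) <= (mdeg al).+1)%N.
Proof.
rewrite /shiftmon mdegE.
have -> : (\sum_(i < n) al i = \sum_(i < n) 1 * al i)%N.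
  by apply: eq_bigr => i _; rewrite mul1n.
apply: msize_prod_le => i; apply: msize_exp_le.
apply: leq_trans (msizeD_le _ _) _; rewrite geq_max msizeXU_le msizeN.
exact: leq_trans (msizeC_le _ _ _) _.
Qed.

Lemma prod0exp (R : realType) n (al : 'X_{1..n}) :
  \prod_(i < n) (0 : R) ^+ (al i) = (al == 0%MM)%:R.
Proof.
case: eqP => [->|ne].
  by rewrite big1 // => i _; rewrite mnm0E expr0.
have [i hi] : exists i, al i != 0%N.
  apply/existsP; apply: contraT; rewrite negb_exists => /forallP h.
  by case: ne; apply/mnmP => i; rewrite mnm0E; apply/eqP; move: (h i); rewrite negbK.
by rewrite (bigD1 i) //= expr0n (negbTE hi) mul0r.
Qed.

Lemma eval_shiftmon (R : realType) n (a : 'rV[R]_n) (al : 'X_{1..n}) :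
  (shiftmon a al).@[coords a] = (al == 0%MM)%:R.
Proof.
rewrite /shiftmon rmorph_prod /= -(prod0exp R).
apply: eq_bigr => i _; rewrite rmorphXn /= mevalB mevalXU mevalC subrr //.
Qed.

Lemma dapp_delta_shift (R : realType) n d (a : 'rV[R]_n) (al : 'X_{1..n < d.+1}) :
  dapp (delta d a) (shiftmon a al) = ((al : 'X_{1..n}) == 0%MM)%:R.
Proof.
have h1 := @msize_shiftmon _ _ a al; have h2 := bmdeg al.
rewrite dapp_delta; first by rewrite eval_shiftmon.
exact: leq_trans h1 h2.
Qed.


Definition aff {R : realType} {n} (A : 'M[R]_n) (t : 'rV[R]_n) (j : 'I_n) : {mpoly R[n]} :=
  \sum_(l < n) A l j *: 'X_l + (t ord0 j)%:MP.

Definition qpoly {R : realType} {n} (A : 'M[R]_n) (t : 'rV[R]_n) (m : 'X_{1..n}) : {mpoly R[n]} :=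
  \prod_(j < n) (aff A t j) ^+ (m j).

Lemma eval_aff (R : realType) n (A : 'M[R]_n) (t x : 'rV[R]_n) j :
  (aff A t j).@[coords x] = (x *m A + t) ord0 j.
Proof.
rewrite /aff mevalD raddf_sum mevalC !mxE /=; congr (_ + _).
by apply: eq_bigr => l _; rewrite mevalZ mevalXU /coords mulrC.
Qed.

Lemma msize_aff (R : realType) n (A : 'M[R]_n) (t : 'rV[R]_n) j :
  (msize (aff A t j) <= 2)%N.
Proof.
rewrite /aff; apply: leq_trans (msizeD_le _ _) _; rewrite geq_max.
rewrite (leq_trans (msizeC_le _ _ _)) // andbT.
apply: msize_sum_le => l; exact: leq_trans (msizeZ_le _ _) (msizeXU_le _ _ _).
Qed.

Lemma msize_qpoly (R : realType) n (A : 'M[R]_n) (t : 'rV[R]_n) (m : 'X_{1..n}) :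
  (msize (qpoly A t m) <= (mdeg m).+1)%N.
Proof.
rewrite /qpoly mdegE.
have -> : (\sum_(i < n) m i = \sum_(i < n) 1 * m i)%N.
  by apply: eq_bigr => i _; rewrite mul1n.
apply: msize_prod_le => i; apply: msize_exp_le; exact: msize_aff.
Qed.

Lemma delta_affine (R : realType) n d (A : 'M[R]_n) (t x : 'rV[R]_n)
   (m : 'X_{1..n < d.+1}) :
  delta d (x *m A + t) m = dapp (delta d x) (qpoly A t m).
Proof.
have h1 := @msize_qpoly _ _ A t m; have h2 := bmdeg m.
rewrite dapp_delta; last exact: leq_trans h1 h2.
rewrite ffunE mevalX /qpoly rmorph_prod /=.
by apply: eq_bigr => j _; rewrite rmorphXn /= eval_aff.
Qed.

Lemma delta_affine_comb (R : realType) n d (A : 'M[R]_n) (t y : 'rV[R]_n) K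
  (lam : 'I_K -> R) (b : 'I_K -> 'rV[R]_n) :
  delta d y = \sum_i lam i *: delta d (b i) ->
  delta d (y *m A + t) = \sum_i lam i *: delta d (b i *m A + t).
Proof.
move=> h; apply/ffunP => m; rewrite delta_affine h dapp_sumZ sum_ffunE.
by apply: eq_bigr => i _; rewrite ffunE delta_affine.
Qed.

Lemma edist_ge0 (R : realType) n (x y : 'rV[R]_n) : 0 <= edist x y.
Proof. exact: sqrtr_ge0. Qed.

Lemma coord_le_edist (R : realType) n (x y : 'rV[R]_n) j :
  `|x ord0 j - y ord0 j| <= edist x y.
Proof.
rewrite /edist -sqrtr_sqr ler_sqrt; last by apply: sumr_ge0 => i _; exact: sqr_ge0.
rewrite (bigD1 j) //= lerDl; apply: sumr_ge0 => i _; exact: sqr_ge0.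
Qed.

Lemma edist_le_l1 (R : realType) n (x y : 'rV[R]_n) :
  edist x y <= \sum_(j < n) `|x ord0 j - y ord0 j|.
Proof.
set S := \sum_j _.
have S0 : 0 <= S by apply: sumr_ge0 => i _.
rewrite /edist -[X in _ <= X](ger0_norm S0) -sqrtr_sqr ler_sqrt; last exact: sqr_ge0.
rewrite expr2 {2}/S mulr_sumr; apply: ler_sum => i _.
rewrite -[X in X <= _]real_normK ?num_real // expr2.
apply: ler_wpM2r => //.
by rewrite /S (bigD1 i) //= lerDl; apply: sumr_ge0.
Qed.

Lemma edist_xx (R : realType) n (x : 'rV[R]_n) : edist x x = 0.
Proof.
rewrite /edist big1 ?sqrtr0 // => i _; by rewrite subrr expr0n.
Qed.

Lemma edist_sym (R : realType) n (x y : 'rV[R]_n) : edist x y = edist y x.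
Proof.
rewrite /edist; congr Num.sqrt; apply: eq_bigr => i _; by rewrite -sqrrN opprB.
Qed.

Lemma edist_eq0 (R : realType) n (x y : 'rV[R]_n) : edist x y = 0 -> x = y.
Proof.
move=> h; apply/rowP => j.
have := @coord_le_edist _ _ x y j; rewrite h normr_le0 subr_eq0 => /eqP.
by rewrite (ord1 ord0).
Qed.

Definition toRow {R : realType} {n d : nat} (v : dualP R n d) :
  'rV[R]_#|{: 'X_{1..n < d.+1}}| := \row_j v (enum_val j).

Lemma toRow_inj (R : realType) n d (u v : dualP R n d) : toRow u = toRow v -> u = v.
Proof.
move=> h; apply/ffunP => m.
by move/rowP/(_ (enum_rank m)): h; rewrite !mxE enum_rankK.
Qed.

Lemma toRow_sum (R : realType) n d K (c : 'I_K -> R) (v : 'I_K -> dualP R n d) :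
  toRow (\sum_i c i *: v i) = \sum_i c i *: toRow (v i).
Proof.
apply/rowP => j; rewrite !mxE summxE sum_ffunE; apply: eq_bigr => i _.
by rewrite !mxE ffunE.
Qed.

Definition Bm {R : realType} {n d j : nat} (b : 'I_j -> 'rV[R]_n) :
  'M[R]_(j, #|{: 'X_{1..n < d.+1}}|) := \matrix_(i < j) toRow (delta d (b i)).

Lemma Hdeg_kernel (R : realType) n d (X : set 'rV[R]_n)
   (c : 'cV[R]_#|{: 'X_{1..n < d.+1}}|) :
  Hdeg_ge X d.+1 -> (forall x, X x -> toRow (delta d x) *m c = 0) -> c = 0.
Proof.
move=> hX hc; apply/matrixP => i0 z; rewrite (ord1 z) mxE.
apply/eqP; apply: contraT => hi0.
pose p : {mpoly R[n]} := \sum_(i < #|{: 'X_{1..n < d.+1}}|) c i ord0 *: 'X_[enum_val i].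
have pc : p@_(enum_val i0) = c i0 ord0.
  rewrite /p raddf_sum (bigD1 i0) //= mcoeffZ mcoeffX eqxx mulr1 big1 ?addr0 //.
  move=> i ne; rewrite mcoeffZ mcoeffX val_eqE (inj_eq enum_val_inj) (negbTE ne).
  by rewrite mulr0.
have pnz : p != 0 by apply: contraNneq hi0 => p0; rewrite -pc p0 mcoeff0.
have ps : (msize p <= d.+1)%N.
  apply: msize_sum_le => i; apply: leq_trans (msizeZ_le _ _) _.
  by rewrite msizeX; exact: bmdeg.
have pv : forall x, X x -> p.@[coords x] = 0.
  move=> x Xx; move/matrixP/(_ ord0 ord0): (hc x Xx).
  rewrite !mxE => h0; rewrite -h0 /p raddf_sum /=; apply: eq_bigr => i _.
  by rewrite mevalZ !mxE ffunE mulrC.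
have := hX p pnz pv; move: ps; case: (msize p) => // k; rewrite ltnS /= => h1 h2.
by have := leq_trans h2 h1; rewrite ltnn.
Qed.

Lemma exists_new_point (R : realType) n d (X : set 'rV[R]_n) j
   (B : 'M[R]_(j, #|{: 'X_{1..n < d.+1}}|)) :
  Hdeg_ge X d.+1 -> (\rank B < #|{: 'X_{1..n < d.+1}}|)%N ->
  exists x, X x /\ ~~ (toRow (delta d x) <= B)%MS.
Proof.
move=> hX hr.
case: (pselect (exists x, X x /\ ~~ (toRow (delta d x) <= B)%MS)) => // H.
exfalso.
have H' : forall x, X x -> (toRow (delta d x) <= B)%MS.
  move=> x Xx; apply/negPn/negP => nH; apply: H; by exists x.
have cnz : cokermx B != 0.
  apply/eqP => c0; have := mxrank_coker B; rewrite c0 mxrank0 => /eqP.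
  by rewrite eq_sym subn_eq0 leqNgt hr.
have [i [l hil]] : exists i l, cokermx B i l != 0.
  case: (pselect (exists i l, cokermx B i l != 0)) => // H2.
  exfalso; move/eqP: cnz; apply; apply/matrixP => i l; rewrite [RHS]mxE.
  apply/eqP; apply: contraT => hn; case: H2; by exists i, l.
pose c : 'cV[R]_#|{: 'X_{1..n < d.+1}}| := col l (cokermx B).
have Bc : B *m c = 0.
  by rewrite /c colE mulmxA mulmx_coker mul0mx.
have : c = 0.
  apply: (@Hdeg_kernel _ _ _ X c hX) => x Xx.
  by have /submxP [D ->] := H' x Xx; rewrite -mulmxA Bc mulmx0.
move/matrixP/(_ i ord0); rewrite /c [LHS]mxE [RHS]mxE => /eqP.
by rewrite (negbTE hil).
Qed.

Lemma exists_basis_rank (R : realType) n d (X : set 'rV[R]_n) :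
  Hdeg_ge X d.+1 -> forall j, (j <= #|{: 'X_{1..n < d.+1}}|)%N ->
  exists b : 'I_j -> 'rV[R]_n, (forall i, X (b i)) /\ \rank (@Bm R n d j b) = j.
Proof.
move=> hX; elim=> [|j ih] hj.
  exists (fun _ => 0); split; first by case.
  by apply/eqP; rewrite -leqn0 rank_leq_row.
have [b [Xb rb]] := ih (ltnW hj).
have [x [Xx nx]] : exists x, X x /\ ~~ (toRow (delta d x) <= Bm b)%MS.
  by apply: (@exists_new_point _ _ _ X j (Bm b) hX); rewrite rb.
pose b' : 'I_j.+1 -> 'rV[R]_n :=
  fun i => if unlift ord_max i is Some i' then b i' else x.
exists b'; split.
  by move=> i; rewrite /b'; case: unlift.
have hE : (Bm b' == Bm b + toRow (delta d x))%MS.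
  apply/andP; split.
    apply/row_subP => i; rewrite /Bm rowK /b'.
    case: (unliftP ord_max i) => [i' _|_].
      apply: submx_trans (addsmxSl _ _).
      by rewrite -[toRow _](rowK (fun i0 => toRow (delta d (b i0)))) row_sub.
    exact: addsmxSr.
  rewrite addsmx_sub; apply/andP; split.
    apply/row_subP => i; rewrite /Bm rowK.
    have -> : b i = b' (lift ord_max i) by rewrite /b' liftK.
    by rewrite -[toRow _](rowK (fun i0 => toRow (delta d (b' i0)))) row_sub.
  have -> : x = b' ord_max by rewrite /b' unlift_none.
  by rewrite -[toRow _](rowK (fun i0 => toRow (delta d (b' i0)))) row_sub.
rewrite (eqmx_rank hE); apply/eqP; rewrite eqn_leq; apply/andP; split.
  have [h _] := mxrank_adds_leqif (Bm b) (toRow (delta d x)).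
  apply: leq_trans h _.
  by rewrite rb -[X in (_ <= X)%N]addn1 leq_add2l rank_leq_row.
rewrite -{1}rb; apply: rank_ltmx; rewrite ltmxE addsmxSl /=.
by apply: contra nx => h; exact: submx_trans (addsmxSr _ _) h.
Qed.

Lemma exists_basis (R : realType) n d (X : set 'rV[R]_n) :
  Hdeg_ge X d.+1 ->
  exists b : 'I_#|{: 'X_{1..n < d.+1}}| -> 'rV[R]_n,
    (forall i, X (b i)) /\ (@Bm R n d _ b) \in unitmx.
Proof.
move=> hX; have [b [Xb rb]] := @exists_basis_rank _ _ _ X hX _ (leqnn _).
exists b; split => //; by rewrite -row_free_unit /row_free rb.
Qed.

Lemma decomp (R : realType) n d (b : 'I_#|{: 'X_{1..n < d.+1}}| -> 'rV[R]_n)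
  (v : dualP R n d) : (@Bm R n d _ b) \in unitmx ->
  v = \sum_i (toRow v *m invmx (Bm b)) ord0 i *: delta d (b i).
Proof.
move=> hu; apply: toRow_inj; rewrite toRow_sum.
rewrite -{1}(mulmxKV hu (toRow v)) mulmx_sum_row.
by apply: eq_bigr => i _; rewrite /Bm rowK.
Qed.

Definition l1 {R : realType} {n} (x : 'rV[R]_n) : R := \sum_(j < n) `|x ord0 j|.

Lemma l1_ge0 (R : realType) n (x : 'rV[R]_n) : 0 <= l1 x.
Proof. by apply: sumr_ge0. Qed.

Lemma coord_le_l1 (R : realType) n (x : 'rV[R]_n) j : `|x ord0 j| <= l1 x.
Proof. by rewrite /l1 (bigD1 j) //= lerDl; apply: sumr_ge0. Qed.

Lemma normr_le_mx (R : realType) n (x : 'rV[R]_n) j : `|x ord0 j| <= `|x|.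
Proof.
have -> : `|x| = mx_norm x by [].
rewrite mx_normrE.
exact: (le_bigmax _ (fun ij : 'I_1 * 'I_n => `|x ij.1 ij.2|) (ord0, j)).
Qed.

Lemma mon_bound (R : realType) n d (y : 'rV[R]_n) (m : 'X_{1..n < d.+1}) :
  `|delta d y m| <= (1 + l1 y) ^+ d.
Proof.
rewrite ffunE mevalX normr_prod.
have h1 : 1 <= 1 + l1 y by rewrite lerDl l1_ge0.
apply: le_trans (_ : \prod_(i < n) (1 + l1 y) ^+ (m i) <= _).
  apply: ler_prod => i _; apply/andP; split; first exact: normr_ge0.
  rewrite normrX; apply: lerXn2r; rewrite ?nnegrE ?normr_ge0 //.
    by rewrite addr_ge0 ?l1_ge0.
  rewrite /coords; apply: le_trans (@coord_le_l1 _ _ y i) _; by rewrite -subr_ge0 addrK ler01.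
rewrite prodrXr -mdegE; apply: (ler_weXn2l h1).
by have := bmdeg m; rewrite ltnS.
Qed.

Lemma coef_bound (R : realType) K (u : 'rV[R]_K) (Bi : 'M[R]_K) (Q : R) i :
  (forall l, `|u ord0 l| <= Q) ->
  `|(u *m Bi) ord0 i| <= Q * \sum_l \sum_i' `|Bi l i'|.
Proof.
move=> hQ; rewrite mxE; apply: le_trans (ler_norm_sum _ _ _) _.
rewrite mulr_sumr; apply: ler_sum => l _.
rewrite normrM; apply: le_trans (_ : `|u ord0 l| * `|Bi l i| <= Q * `|Bi l i|) _.
  by apply: ler_wpM2r.
apply: ler_wpM2l; first exact: le_trans (normr_ge0 _) (hQ l).
by rewrite (bigD1 i) //= lerDl; apply: sumr_ge0.
Qed.

Definition good {R : realType} {n} (X : set 'rV[R]_n)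
  (psi : 'rV[R]_n -> 'rV[R]_n) (r : R) :=
  (exists A t, A \in unitmx /\ forall x, psi x = x *m A + t) /\ 0 < r /\
  (forall x y, edist (psi x) (psi y) = r * edist x y) /\
  (forall x, X x -> X (psi x)).

Lemma good_id (R : realType) n (X : set 'rV[R]_n) : good X id 1.
Proof.
split; first by exists 1%:M, 0; split; [exact: unitmx1 | move=> x; rewrite mulmx1 addr0].
by split => //; split => // x y; rewrite mul1r.
Qed.

Lemma good_comp (R : realType) n (X : set 'rV[R]_n) psi r phi rho :
  good X psi r -> good X phi rho -> good X (psi \o phi) (r * rho).
Proof.
move=> [[A1 [t1 [u1 h1]]] [r0 [e1 x1]]] [[A2 [t2 [u2 h2]]] [rh0 [e2 x2]]].
split.
  exists (A2 *m A1), (t2 *m A1 + t1); split; first by rewrite unitmx_mul u1 u2.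
  by move=> x; rewrite /= h2 h1 mulmxDl mulmxA addrA.
split; first exact: mulr_gt0.
split; last by move=> x Xx; apply: x1; apply: x2.
by move=> x y; rewrite /= e1 e2 mulrA.
Qed.

Lemma similarity_good (R : realType) n (X : set 'rV[R]_n) (phi : 'rV[R]_n -> 'rV[R]_n) :
  similarity phi -> (forall x, X x -> X (phi x)) -> exists lam, good X phi lam.
Proof.
case=> [[A [b hA]] [lam [lam0 hlam]]] hX; exists lam; split; last by [].
exists A, b; split => //.
rewrite -row_free_unit; apply: inj_row_free => v hv.
have : edist (phi v) (phi 0) = 0 by rewrite !hA hv mul0mx edist_xx.
rewrite hlam => /eqP; rewrite mulf_eq0 gt_eqF //= => /eqP /edist_eq0 ->.
done.
Qed.

Lemma ratio_lt1 (R : realType) n (j0 : 'I_n) (phi : 'rV[R]_n -> 'rV[R]_n) (lam : R) :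
  contraction phi -> (forall x y, edist (phi x) (phi y) = lam * edist x y) -> lam < 1.
Proof.
case=> K [/andP [K0 K1] hK] hl.
pose e : 'rV[R]_n := const_mx 1.
have E1 : 1 <= edist 0 e.
  by have := @coord_le_edist _ _ 0 e j0; rewrite !mxE sub0r normrN normr1.
have E0 : 0 < edist 0 e by apply: lt_le_trans E1.
have := hK 0 e; rewrite hl ler_pM2r // => h; exact: le_lt_trans h K1.
Qed.

Lemma iterate (R : realType) n (X : set 'rV[R]_n) p (phi : 'I_p -> 'rV[R]_n -> 'rV[R]_n)
   (lam : 'I_p -> R) theta s :
  (forall i, good X (phi i) (lam i)) -> (forall i, lam i <= theta) -> 0 <= theta ->
  X = \bigcup_(i in [set: 'I_p]) (phi i @` X) -> X s ->
  forall L, exists psi r z, good X psi r /\ r <= theta ^+ L /\ X z /\ psi z = s.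
Proof.
move=> hg hl ht hXe Xs; elim=> [|L [psi [r [z [gp [hr [Xz pz]]]]]]].
  exists id, 1, s; split; first exact: good_id.
  by rewrite expr0.
have : X z by [].
rewrite {1}hXe => -[i _ [z' Xz' ez']].
exists (psi \o phi i), (r * lam i), z'; split; first exact: good_comp.
split; last by split => //=; rewrite ez'.
have [_ [r0 _]] := gp; have [_ [l0 _]] := hg i.
rewrite exprSr; apply: ler_pM => //; exact: ltW.
Qed.

Lemma small_pow (R : realType) (theta : R) : 0 <= theta -> theta < 1 ->
  forall e, 0 < e -> exists L, theta ^+ L < e.
Proof.
move=> t0 t1 e e0.
have h : (fun L => theta ^+ L) @ \oo --> 0 by apply: cvg_expr; rewrite ger0_norm.
have := cvgr_dist_lt _ _ h _ e0; case=> N _ hN; exists N.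
have := hN N (leqnn N); rewrite /= sub0r normrN ger0_norm //; exact: exprn_ge0.
Qed.

Lemma card_M_le n d : (#|{: 'X_{1..n < d.+1}}| <= Ndim n d)%N.
Proof.
pose f (m : 'X_{1..n < d.+1}) : 'X_{1..n.+1} :=
  [multinom (if unlift ord_max i is Some i' then m i' else (d - mdeg m)%N) | i < n.+1].
have finj : injective f.
  move=> m1 m2 /mnmP h; apply/val_inj/mnmP => i.
  by have := h (lift ord_max i); rewrite !mnmE liftK.
have fdeg : forall m, mdeg (f m) = d.
  move=> m; rewrite mdegE big_ord_recr /= mnmE unlift_none.
  have -> : (\sum_(i < n) f m (widen_ord (leqnSn n) i) = mdeg m)%N.
    rewrite mdegE; apply: eq_bigr => i _; rewrite mnmE.
    have -> : widen_ord (leqnSn n) i = lift ord_max i.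
      by apply: val_inj; rewrite /= /bump leqNgt ltn_ord.
    by rewrite liftK.
  by rewrite subnKC // -ltnS bmdeg.
rewrite /Ndim addnC -(size_basis n d) cardE.
rewrite -(size_map f); apply: uniq_leq_size.
  by rewrite map_inj_uniq ?enum_uniq.
move=> x /mapP [m _ ->]; by rewrite -basis_cover fdeg.
Qed.

Lemma DeltaE_mono (R : realType) n d N (X : set 'rV[R]_n) (E E' : bundle R n d) as_ xi :
  (forall a xi, E a xi -> E' a xi) -> DeltaE N X E as_ xi -> DeltaE N X E' as_ xi.
Proof.
move=> h [hX [xis [hE rest]]]; split => //; exists xis; split => // i; exact: h.
Qed.

Lemma Eprime_mono (R : realType) n d N (X : set 'rV[R]_n) (E E' : bundle R n d) a xi :
  (forall a xi, E a xi -> E' a xi) -> Eprime N X E a xi -> Eprime N X E' a xi.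
Proof.
move=> h [Xa he]; split => // eps e0; have [as_ [eta [hD rest]]] := he eps e0.
exists as_, eta; split => //; exact: DeltaE_mono hD.
Qed.

Lemma delta_Eprime0 (R : realType) n d N (X : set 'rV[R]_n) a :
  X a -> Eprime N X (E0 d X) a (delta d a).
Proof.
move=> Xa; split => // eps e0.
exists (fun _ => a), (delta d a); split; last first.
  split; first by move=> i; rewrite edist_xx.
  by move=> m; rewrite subrr normr0.
split; first by [].
exists (fun i => if i == ord0 then delta d a else 0); split.
  move=> i; split => //; case: eqP => _.
    by exists 1; rewrite scale1r.
  by exists 0; rewrite scale0r.
split.
  by rewrite (bigD1 ord0) //= ?eqxx big1 ?addr0 // => i /negbTE ->.
move=> i al; rewrite edist_xx; case: eqP => _; last by rewrite dapp0 normr0 mulr0 ler01.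
rewrite dapp_delta_shift; case: eqP => [h|_]; last by rewrite normr0 mulr0 ler01.
rewrite h mdeg0 subn0 normr1 mulr1 expr0n; case: (_ == _); by rewrite ?ler01 ?lexx.
Qed.

Lemma E0_sub_Eseq (R : realType) n d N (X : set 'rV[R]_n) k a xi :
  E0 d X a xi -> Eseq d N X k a xi.
Proof.
elim: k a xi => [//|k ih] a xi [Xa [lam ->]] /=.
split => //; exists [:: (lam, delta d a)]; split; last by rewrite big_seq1.
move=> c; rewrite inE => /eqP -> /=.
apply: (@Eprime_mono _ _ _ _ _ (E0 d X)); last exact: (@delta_Eprime0 _ _ _ N X a Xa).
move=> a' xi' h; exact: ih.
Qed.

Lemma X_bound (R : realType) n (X : set 'rV[R]_n) : compact X ->
  exists D : R, 0 <= D /\ forall x y, X x -> X y -> edist x y <= D.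
Proof.
move=> /compact_bounded [M0 [_ HM]].
have h := HM (`|M0| + 1) (ltr_pwDr ltr01 (ler_norm M0)).
set Mb := `|M0| + 1 in h.
have Mb0 : 0 <= Mb by rewrite addr_ge0.
exists ((Mb + Mb) *+ n); split; first by rewrite mulrn_wge0 // addr_ge0.
move=> x y Xx Xy; apply: le_trans (@edist_le_l1 _ _ x y) _.
rewrite -[X in _ *+ X]card_ord -sumr_const; apply: ler_sum => j _.
apply: le_trans (ler_normB _ _) _; apply: lerD.
  exact: le_trans (@normr_le_mx _ _ x j) (h x Xx).
exact: le_trans (@normr_le_mx _ _ y j) (h y Xy).
Qed.

Lemma ss_data (R : realType) n (X : set 'rV[R]_n) : (1 <= n)%N -> self_similar X ->
  exists p (phi : 'I_p -> 'rV[R]_n -> 'rV[R]_n) (lam : 'I_p -> R) theta,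
   (forall i, good X (phi i) (lam i)) /\ (forall i, lam i <= theta) /\
   0 <= theta /\ theta < 1 /\
   X = \bigcup_(i in [set: 'I_p]) (phi i @` X) /\ compact X.
Proof.
move=> n1 [p [phi [p2 [hphi [ne [cX hXe]]]]]].
have j0 : 'I_n := Ordinal n1.
have inv : forall i x, X x -> X (phi i x).
  move=> i x Xx; rewrite hXe; exists i => //; by exists x.
have hl : forall i, exists lam, good X (phi i) lam /\ lam < 1.
  move=> i; have [lam g] := @similarity_good _ _ X _ (proj2 (hphi i)) (inv i).
  exists lam; split => //; apply: (@ratio_lt1 _ _ j0 _ _ (proj1 (hphi i))).
  by case: g => _ [_ []].
have [lam hlam] := boolp.choice hl.
exists p, phi, lam, (\big[Num.max/0]_i lam i).
split; first by move=> i; case: (hlam i).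
split; first by move=> i; exact: le_bigmax.
split.
  elim/big_ind: _ => //; first by move=> x y hx hy; rewrite le_max hx.
  by move=> i _; case: (hlam i) => [[_ [l0 _]] _]; exact: ltW.
split; last by split.
by apply: bigmax_lt => // i _; case: (hlam i).
Qed.

Lemma main_Eprime (R : realType) n d (X : set 'rV[R]_n) N (s c : 'rV[R]_n) p
  (phi : 'I_p -> 'rV[R]_n -> 'rV[R]_n) (lam : 'I_p -> R) (theta D : R)
  (b : 'I_#|{: 'X_{1..n < d.+1}}| -> 'rV[R]_n) (i0 : 'I_#|{: 'X_{1..n < d.+1}}|) :
  nat_of_ord i0 = 0%N ->
  (#|{: 'X_{1..n < d.+1}}| <= N.+1)%N ->
  (forall i, good X (phi i) (lam i)) -> (forall i, lam i <= theta) ->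
  0 <= theta -> theta < 1 ->
  X = \bigcup_(i in [set: 'I_p]) (phi i @` X) ->
  0 <= D -> (forall x y, X x -> X y -> edist x y <= D) ->
  (forall i, X (b i)) -> (@Bm R n d _ b) \in unitmx -> X s ->
  exists C, 0 < C /\ Eprime N X (E0 d X) s (C^-1 *: delta d c).
Proof.
move=> hi0 hk hg hl t0 t1 hXe D0 hD Xb uB Xs.
set k := #|{: 'X_{1..n < d.+1}}| in hk b i0 hi0 uB Xb *.
set b0 := b i0.
set G := \sum_l \sum_i `|invmx (Bm b) l i|.
set S := \sum_(j < n) `|c ord0 j - s ord0 j|.
set H := 1 + l1 b0 + (S + D *+ n) *+ n.
set C := D ^+ d * H ^+ d * G + 1.
have G0 : 0 <= G by apply: sumr_ge0 => l _; apply: sumr_ge0.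
have S0 : 0 <= S by apply: sumr_ge0.
have H0 : 0 <= H.
  by rewrite /H addr_ge0 ?addr_ge0 ?l1_ge0 ?mulrn_wge0 ?addr_ge0 ?mulrn_wge0.
have C0 : 0 < C.
  by rewrite /C ltr_pwDr ?ltr01 // mulr_ge0 // mulr_ge0 // exprn_ge0.
exists C; split => //; split => // eps e0.
have D1 : 0 < D + 1 by rewrite ltr_pwDr ?ltr01.
have [L hL] := @small_pow _ theta t0 t1 (eps / (D + 1)) (divr_gt0 e0 D1).
have [psi [r [z [gp [hr [Xz pz]]]]]] := @iterate _ _ X p phi lam theta s hg hl t0 hXe Xs L.
have tL1 : theta ^+ L <= 1 by apply: exprn_ile1 => //; exact: ltW.
have r1 : r <= 1 := le_trans hr tL1.
case: gp => [[A [t [uA hA]]] [r0 [hpsi Xpsi]]].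
pose y := (c - t) *m invmx A.
have py : psi y = c by rewrite hA /y mulmxKV // subrK.
pose w := toRow (delta d y) *m invmx (Bm b).
have hdec := @decomp _ _ _ b (delta d y) uB.
have hc : delta d c = \sum_i w ord0 i *: delta d (psi (b i)).
  rewrite -py hA; under eq_bigr do rewrite hA.
  exact: (@delta_affine_comb _ _ d A t y _ _ b hdec).
have wb : forall i, `|w ord0 i| <= (1 + l1 y) ^+ d * G.
  move=> i; apply: coef_bound => l; rewrite mxE; exact: mon_bound.
have ey : l1 y <= l1 b0 + edist y b0 *+ n.
  have -> : edist y b0 *+ n = \sum_(j < n) edist y b0 by rewrite sumr_const card_ord.
  rewrite /l1 -big_split /=; apply: ler_sum => j _.
  have e : y ord0 j = b0 ord0 j + (y ord0 j - b0 ord0 j) by rewrite addrC subrK.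
  rewrite {1}e; apply: le_trans (ler_normD _ _) _; apply: lerD => //.
  exact: coord_le_edist.
have f2 : r * edist y b0 = edist c (psi b0) by rewrite -py hpsi.
have es : edist s (psi b0) <= D.
  rewrite -pz hpsi; apply: le_trans (_ : r * D <= D).
    apply: ler_wpM2l; [exact: ltW | exact: (hD _ _ Xz (Xb i0))].
  by rewrite ler_piMl.
have f3 : edist c (psi b0) <= S + D *+ n.
  apply: le_trans (@edist_le_l1 _ _ c (psi b0)) _.
  have -> : D *+ n = \sum_(j < n) D by rewrite sumr_const card_ord.
  rewrite /S -big_split /=; apply: ler_sum => j _.
  apply: le_trans (ler_distD (s ord0 j) _ _) _; apply: lerD => //.
  exact: le_trans (@coord_le_edist _ _ s (psi b0) j) es.
have key : r * (1 + l1 y) <= H.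
  apply: le_trans (_ : r * (1 + (l1 b0 + edist y b0 *+ n)) <= _).
    by apply: ler_wpM2l; [exact: ltW | rewrite lerD2l].
  rewrite mulrDr mulrDr mulr1 mulrnAr f2 /H -addrA; apply: lerD => //.
  apply: lerD; first by rewrite ler_piMl ?l1_ge0.
  exact: ler_wMn2r.
have cb : forall i, edist (psi (b i)) (psi b0) ^+ d * `|w ord0 i| <= D ^+ d * H ^+ d * G.
  move=> i; rewrite hpsi.
  have e0' : 0 <= edist (b i) b0 by exact: edist_ge0.
  have eD : edist (b i) b0 <= D by exact: (hD _ _ (Xb i) (Xb i0)).
  apply: le_trans (_ : (r * edist (b i) b0) ^+ d * ((1 + l1 y) ^+ d * G) <= _).
    by apply: ler_wpM2l (wb i); rewrite exprn_ge0 // mulr_ge0 // ltW.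
  have -> : (r * edist (b i) b0) ^+ d * ((1 + l1 y) ^+ d * G) =
            edist (b i) b0 ^+ d * (r * (1 + l1 y)) ^+ d * G.
    by rewrite !exprMn; ring.
  have ly0 : 0 <= r * (1 + l1 y) by rewrite mulr_ge0 ?addr_ge0 ?l1_ge0 ?ltW.
  apply: (ler_wpM2r G0); apply: ler_pM; rewrite ?exprn_ge0 //.
    by apply: lerXn2r; rewrite ?nnegrE.
  by apply: lerXn2r; rewrite ?nnegrE.
have k0 : (0 < k)%N := leq_ltn_trans (leq0n _) (ltn_ord i0).
pose ii (i : 'I_N.+1) : 'I_k := insubd i0 (i : nat).
have ii0 : ii ord0 = i0 by apply: val_inj; rewrite /ii val_insubd /= k0 hi0.
pose as_ i := psi (b (ii i)).
pose co (i : 'I_N.+1) : R := if (i < k)%N then w ord0 (ii i) / C else 0.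
exists as_, (C^-1 *: delta d c); split; last split.
- split; first by move=> i; apply: Xpsi; apply: Xb.
  exists (fun i => co i *: delta d (as_ i)); split.
    move=> i; split; [by apply: Xpsi; apply: Xb | by exists (co i)].
  split.
    pose F (i : nat) := (if (i < k)%N then w ord0 (insubd i0 i) / C else 0) *:
                          delta d (psi (b (insubd i0 i))).
    have -> : \sum_(i < N.+1) co i *: delta d (as_ i) = \sum_(i < N.+1) F i by [].
    have -> : \sum_(i < N.+1) F i = \sum_(i < N.+1 | (i < k)%N) F i.
      rewrite [RHS]big_mkcond; apply: eq_bigr => i _; rewrite /F.
      by case: ifP => // _; rewrite scale0r.
    rewrite -(big_ord_widen _ F hk) hc scaler_sumr; apply: eq_bigr => i _.
    rewrite /F ltn_ord.
    have -> : insubd i0 (i : nat) = i by apply: val_inj; rewrite val_insubd ltn_ord.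
    by rewrite scalerA mulrC.
  move=> i al; rewrite dappZ dapp_delta_shift.
  case: eqP => [h|_]; last by rewrite mulr0 normr0 mulr0 ler01.
  rewrite h mdeg0 subn0 mulr1 /co.
  case: ifP => hik; last by rewrite normr0 mulr0 ler01.
  rewrite /as_ ii0 normrM normfV (gtr0_norm C0) mulrA ler_pdivrMr // mul1r.
  by apply: le_trans (cb (ii i)) _; rewrite /C lerDl ler01.
- move=> i; rewrite /as_ -pz hpsi.
  have hL' : theta ^+ L * (D + 1) < eps by rewrite -ltr_pdivlMr.
  apply: le_lt_trans hL'; apply: le_trans (_ : theta ^+ L * D <= _).
    apply: ler_pM => //; [exact: ltW | exact: edist_ge0 | exact: (hD _ _ (Xb _) Xz)].
  by apply: ler_wpM2l; [exact: exprn_ge0 | rewrite lerDl ler01].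
- by move=> m; rewrite subrr normr0.
Qed.

Theorem theorem5p2 (R : realType) (n d : nat) (X : set 'rV[R]_n) :
  (1 <= n)%N ->
  self_similar X ->
  Hdeg_ge X d.+1 ->
  forall s : 'rV[R]_n, X s ->
  forall xi : dualP R n d, paratangent d (Ndim n d).-1 X s xi.
Proof.
move=> n1 hss hX s Xs xi.
have [p [phi [lam [theta [hg [hl [t0 [t1 [hXe cX]]]]]]]]] := @ss_data _ _ X n1 hss.
have [D [D0 hD]] := @X_bound _ _ X cX.
have [b [Xb uB]] := @exists_basis _ _ d X hX.
have Np : (0 < Ndim n d)%N by rewrite /Ndim bin_gt0 leq_addl.
set N := (Ndim n d).-1.
have hk : (#|{: 'X_{1..n < d.+1}}| <= N.+1)%N by rewrite /N prednK //; exact: card_M_le.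
have m0 : 'X_{1..n < d.+1}.
  apply: (@BMultinom n d.+1 (0%MM)); by rewrite mdeg0.
have k0 : (0 < #|{: 'X_{1..n < d.+1}}|)%N by apply/card_gt0P; exists m0.
pose i0 : 'I_#|{: 'X_{1..n < d.+1}}| := Ordinal k0.
have hC : forall j : 'I_#|{: 'X_{1..n < d.+1}}|,
    exists C, 0 < C /\ Eprime N X (E0 d X) s (C^-1 *: delta d (b j)).
  move=> j.
  exact: (@main_Eprime _ _ d X N s (b j) p phi lam theta D b i0 erefl hk hg hl t0 t1 hXe D0 hD Xb uB Xs).
have [Cf hCf] := boolp.choice hC.
rewrite /paratangent.
have -> : (2 * Ndim n d = (2 * Ndim n d).-1.+1)%N by rewrite prednK // muln_gt0.
split => //.
set w := toRow xi *m invmx (Bm b).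
exists [seq (w ord0 j * Cf j, (Cf j)^-1 *: delta d (b j)) | j <- enum 'I_#|{: 'X_{1..n < d.+1}}|].
split.
  move=> c /mapP [j _ ->] /=.
  apply: (@Eprime_mono _ _ _ _ _ (E0 d X)); last exact: (proj2 (hCf j)).
  move=> a xi' h; exact: E0_sub_Eseq.
rewrite big_map big_enum /= {1}(@decomp _ _ _ b xi uB).
apply: eq_bigr => j _; rewrite scalerA -mulrA mulfV ?mulr1 //.
exact: lt0r_neq0 (proj1 (hCf j)).
Qed.
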